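(* Let $D'$ be a digraph and $T$ a 1-optimal out-branching of $D'$. For each $v\in V(T)$ define the bag $X_v=\{u,v\}\cup \mathrm{BrSucc}(T)\cup\mathrm{Leaf}(T)\cup\mathrm{Head}(\mathrm{Back}_{D'}^T(v))$, where $u$ is the in-neighbor of $v$ in $T$ (and $u$ is omitted if $v$ is the root of $T$). Then $(\{X_v: v\in V(T)\}, T)$, with $T$ regarded as an undirected tree, is a tree decomposition of $D'$ (with arc directions ignored).
   Context: An out-tree is a subgraph that is a tree (ignoring directions) with one vertex (the root) of in-degree $0$ and all others of in-degree $1$; an out-branching is a spanning out-tree. $\mathrm{Leaf}(T)$ is the set of vertices of out-degree $0$ in $T$; a branch vertex has out-degree at least $2$ in $T$; $\mathrm{BrSucc}(T)$ is the set of vertices whose in-neighbor in $T$ is a branch vertex. Write $u\preceq_T v$ if $v$ is reachable from $u$ in $T$, $u\prec_T v$ if also $u\ne v$. $\mathrm{Back}_{D'}^T(z)=\{(a,b)\in A(D'): b\prec_T z\preceq_T a\}$, and $\mathrm{Head}(B)$ is the set of heads of arcs of $B$. For an arc $(a,b)\in A(D')\setminus A(T)$ with $b$ not the root, the 1-change for $(a,b)$ replaces the arc of $T$ entering $b$ by $(a,b)$. $T$ is 1-optimal if no 1-change yields an out-branching with more leaves. A tree decomposition of a digraph is a pair consisting of a tree $U$ and bags $X_i\subseteq V$ ($i\in V(U)$) covering all vertices, such that each arc has both endpoints in some bag and, for each vertex, the nodes whose bags contain it form a subtree of $U$. *)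

(* Defs.v *)
From mathcomp Require Import all_boot.
Set Implicit Arguments. Unset Strict Implicit. Unset Printing Implicit Defensive.

Section Defs.
Variable V : finType.

(* T (arc relation) is an out-branching of D: every arc of T is an arc of D,
   some root r has in-degree 0, all other vertices in-degree 1, and every
   vertex is reachable from r in T (hence T is a spanning out-tree). *)
Definition out_branching (D T : rel V) : Prop :=
  subrel T D /\
  exists r : V,
    (forall v, #|[set u | T u v]| = (v != r) :> nat) /\
    (forall v, connect T r v).

Definition Leaf (T : rel V) : {set V} := [set x | #|[set y | T x y]| == 0].

Definition BrSucc (T : rel V) : {set V} :=
  [set x | [exists p, T p x && (2 <= #|[set y | T p y]|)]].

Definition preceq (T : rel V) (u v : V) : bool := connect T u v.
Definition prec (T : rel V) (u v : V) : bool := connect T u v && (u != v).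

Definition Back (D T : rel V) (z : V) : {set V * V} :=
  [set e | D e.1 e.2 && prec T e.2 z && preceq T z e.1].

Definition Head (B : {set V * V}) : {set V} := [set e.2 | e in B].

(* The 1-change for the arc (a,b): replace the arc of T entering b by (a,b). *)
Definition one_change (T : rel V) (a b : V) : rel V :=
  fun x y => (T x y && (y != b)) || ((x == a) && (y == b)).

(* b is not the root: b has an in-neighbour in T *)
Definition one_optimal (D T : rel V) : Prop :=
  out_branching D T /\
  forall a b : V, D a b -> ~~ T a b -> [exists u, T u b] ->
    out_branching D (one_change T a b) ->
    #|Leaf (one_change T a b)| <= #|Leaf T|.

(* Bag X_v = {u,v} u BrSucc(T) u Leaf(T) u Head(Back(v)), u = in-neighbour
   of v in T (omitted if v is the root, in which case [set u | T u v] = set0). *)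
Definition bag (D T : rel V) (v : V) : {set V} :=
  [set u | T u v] :|: [set v] :|: BrSucc T :|: Leaf T :|: Head (Back D T v).
End Defs.

(* Undirected graph on I given by a symmetric relation E is a tree:
   nonempty, connected, with exactly |I|-1 (unordered) edges. *)
Definition is_tree (I : finType) (E : rel I) : Prop :=
  symmetric E /\ irreflexive E /\ 0 < #|I| /\
  (forall i j, connect E i j) /\
  #|[set p : I * I | E p.1 p.2]| = 2 * (#|I| - 1).

Definition tree_decomposition (V I : finType) (D : rel V) (E : rel I)
    (X : I -> {set V}) : Prop :=
  is_tree E /\
  (forall w : V, exists i, w \in X i) /\
  (forall x y : V, D x y -> exists i, (x \in X i) && (y \in X i)) /\
  (forall w : V, forall i j, w \in X i -> w \in X j ->
     connect [rel a b | E a b && (w \in X a) && (w \in X b)] i j).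

(* Main.v *)
Require Import Defs.
From mathcomp Require Import all_boot zify.
Set Implicit Arguments. Unset Strict Implicit. Unset Printing Implicit Defensive.

Section Help.
Variable V : finType.
Implicit Types (T D : rel V).

Lemma path_last_connect T x p z : path T x p -> z \in x :: p -> connect T z (last x p).
Proof.
elim: p x z => [|y p IH] x z /=.
  by move=> _; rewrite inE => /eqP ->.
case/andP=> Txy Hp; rewrite inE => /orP[/eqP->|Hz].
  apply: connect_trans (connect1 Txy) _; by apply: IH => //; rewrite inE eqxx.
by apply: IH.
Qed.

Lemma path_first_connect T x p z : path T x p -> z \in x :: p -> connect T x z.
Proof.
elim: p x => [|y p IH] x /=.
  by move=> _; rewrite inE => /eqP ->.
case/andP=> Txy Hp; rewrite inE => /orP[/eqP->|Hz]; first exact: connect0.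
apply: connect_trans (connect1 Txy) _; exact: IH.
Qed.

Lemma par_uniq T v x y : #|[set u | T u v]| = 1 -> T x v -> T y v -> x = y.
Proof.
move=> /eqP/cards1P[z Hz] Hx Hy.
have: x \in [set u | T u v] by rewrite inE.
have: y \in [set u | T u v] by rewrite inE.
by rewrite Hz !inE => /eqP-> /eqP->.
Qed.

Lemma closed_root T r (S : pred V) v : (forall x y, T x y -> S y -> S x) ->
  connect T r v -> S v -> S r.
Proof.
move=> Hc /connectP[p Hp ->]. elim: p r Hp => [|y p IH] r //= /andP[Try Hp] HS.
exact: Hc Try (IH _ Hp HS).
Qed.

Lemma indeg1 D T r x y : (forall v, #|[set u | T u v]| = (v != r) :> nat) ->
  T x y -> #|[set u | T u y]| = 1 /\ y != r.
Proof.
move=> Hin Txy; have H := Hin y; have [Hy|Hy] := eqVneq y r; last by rewrite H Hy.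
subst y; move: H; rewrite eqxx => /eqP; rewrite cards_eq0 => /eqP H.
have: x \in [set u | T u r] by rewrite inE.
by rewrite H inE.
Qed.

Lemma ob_antisym D T a b : out_branching D T -> T a b -> T b a -> False.
Proof.
case=> _ [r [Hin Hc]] Tab Tba.
have [Ha Har] := indeg1 D Hin Tba.
have [Hb Hbr] := indeg1 D Hin Tab.
have: (r == a) || (r == b).
  have H := @closed_root T r (fun x => (x == a) || (x == b)) a.
  apply: H (Hc a) _; last by rewrite /= eqxx.
  move=> x y Txy /orP[]/eqP Hy; subst y.
    by rewrite (par_uniq Ha Txy Tba) eqxx orbT.
  by rewrite (par_uniq Hb Txy Tab) eqxx.
by case/orP=> /eqP Hr; [move: Har | move: Hbr]; rewrite Hr eqxx.
Qed.

End Help.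
Lemma tree_part (V : finType) (D T : rel V) : irreflexive D -> out_branching D T ->
  is_tree [rel x y | T x y || T y x].
Proof.
move=> irrD OB; have [sTD [r [Hin Hc]]] := OB.
have irrT x : T x x = false by apply/negbTE/negP => /sTD; rewrite irrD.
have HE : forall i, connect [rel x y | T x y || T y x] r i.
  move=> i; apply: (connect_sub _ (Hc i)) => x y Txy; apply: connect1; by rewrite /= Txy.
have symE : symmetric [rel x y | T x y || T y x] by move=> x y /=; rewrite orbC.
split; first exact: symE.
split; first by move=> x /=; rewrite irrT.
split; first by apply/card_gt0P; exists r.
split.
  move=> i j; apply: connect_trans (HE j); rewrite (sym_connect_sym symE); exact: HE i.
pose A := [set p : V * V | T p.1 p.2].
pose sw := fun p : V * V => (p.2, p.1).
have swK : cancel sw sw by case.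
have HA : #|A| = #|V|.-1.
  have Him : snd @: A = [set~ r].
    apply/setP => v; rewrite !inE; apply/imsetP/idP.
      by case=> -[u w]; rewrite inE /= => Tuw ->; have [] := indeg1 D Hin Tuw.
    move=> Hv; have := Hin v; rewrite Hv => /eqP/cards1P[u Hu].
    have: u \in [set u | T u v] by rewrite Hu inE.
    by rewrite inE => Tuv; exists (u, v); rewrite ?inE.
  rewrite -(cardsC1 r) -Him card_in_imset //.
  move=> [u1 v1] [u2 v2]; rewrite !inE /= => T1 T2 Hv; subst v2.
  have [H1 _] := indeg1 D Hin T1.
  by rewrite (par_uniq H1 T1 T2).
have Hset : [set p : V * V | [rel x y | T x y || T y x] p.1 p.2] = A :|: sw @: A.
  apply/setP => -[x y]; rewrite !inE /=; congr (_ || _); apply/idP/imsetP.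
    by move=> Tyx; exists (y, x); rewrite ?inE.
  by case=> -[u w]; rewrite inE /= => Tuw [-> ->].
have HI : A :&: sw @: A = set0.
  apply/setP => -[x y]; rewrite !inE /=; apply/negbTE/negP => /andP[Txy /imsetP[[u w]]].
  rewrite inE /= => Tuw [Hx Hy]; subst x y; exact: (ob_antisym OB Txy Tuw).
rewrite Hset cardsU HI cards0 subn0 (card_imset _ (can_inj swK)) HA.
by rewrite -subn1; lia.
Qed.
Section H2.
Variable V : finType.
Implicit Types (D T : rel V).

Lemma path_change T a b x p : path T x p -> b \notin p -> path (one_change T a b) x p.
Proof.
elim: p x => [|y p IH] x //= /andP[Txy Hp]; rewrite inE negb_or => /andP[Hyb Hb].
by rewrite /one_change Txy eq_sym Hyb IH.
Qed.


Lemma oc_ob D T a b : out_branching D T -> D a b -> ~~ connect T b a ->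
  out_branching D (one_change T a b).
Proof.
case=> sTD [r [Hin Hc]] Dab Nba.
have Hbr : b != r by apply: contraNneq Nba => ->; exact: Hc.
split.
  move=> x y /orP[/andP[/sTD //]|/andP[/eqP-> /eqP->]] //.
exists r; split.
  move=> v; rewrite /one_change; have [->|Hvb] := eqVneq v b.
    rewrite Hbr (_ : [set u | _] = [set a]) ?cards1 //.
    by apply/setP => u; rewrite !inE andbF /= andbT.
  rewrite -(Hin v); apply: eq_card => u; rewrite !inE andbT andbF orbF //.
move=> v.
have Hnb : forall w, ~~ connect T b w -> connect (one_change T a b) r w.
  move=> w Nw; case/connectP: (Hc w) => p Hp Hl.
  apply/connectP; exists p => //; refine (path_change a Hp _).
  apply/negP => Hbp; apply: (negP Nw); rewrite Hl; apply: path_last_connect Hp _.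
  by rewrite inE Hbp orbT.
have [Hbv|Nbv] := boolP (connect T b v); last exact: Hnb.
apply: connect_trans (Hnb a Nba) _.
apply: connect_trans (connect1 (_ : one_change T a b a b)) _.
  by rewrite /one_change !eqxx orbT.
case/connectP: Hbv => p Hp Hl.
case: (shortenP Hp) Hl => p' Hp' Hu _ Hl.
apply/connectP; exists p' => //; refine (path_change a Hp' _).
by move: Hu; rewrite /= => /andP[].
Qed.

Lemma bag_self D T v : v \in bag D T v.
Proof. by rewrite /bag !in_setU set11 /= !orbT. Qed.
Lemma bag_par D T u v : T u v -> u \in bag D T v.
Proof. by move=> H; rewrite /bag !in_setU inE H. Qed.
Lemma bag_br D T u v : u \in BrSucc T -> u \in bag D T v.
Proof. by move=> H; rewrite /bag !in_setU H !orbT. Qed.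
Lemma bag_leaf D T u v : u \in Leaf T -> u \in bag D T v.
Proof. by move=> H; rewrite /bag !in_setU H !orbT. Qed.
Lemma bag_head D T u v : u \in Head (Back D T v) -> u \in bag D T v.
Proof. by move=> H; rewrite /bag !in_setU H !orbT. Qed.
Lemma bag_inv D T u v : u \in bag D T v ->
  T u v \/ u = v \/ u \in BrSucc T \/ u \in Leaf T \/ u \in Head (Back D T v).
Proof.
rewrite /bag !in_setU inE => /orP[/orP[/orP[/orP[H|/set1P H]|H]|H]|H];
  tauto.
Qed.

Lemma leafP T x : reflect (forall y, ~~ T x y) (x \in Leaf T).
Proof.
rewrite inE cards_eq0; apply: (iffP eqP) => [H y|H].
  have: y \notin [set y | T x y] by rewrite H inE.
  by rewrite inE.
by apply/setP => y; rewrite !inE (negbTE (H y)).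
Qed.


Lemma cover_arc D T a b : irreflexive D -> one_optimal D T -> D a b ->
  exists v, (a \in bag D T v) && (b \in bag D T v).
Proof.
move=> irrD [OB Hopt] Dab.
have Hba : b != a by apply: contraTneq Dab => ->; rewrite irrD.
have [Cba|Nba] := boolP (connect T b a).
  exists a; rewrite bag_self /=; apply: bag_head; apply/imsetP; exists (a, b) => //.
  by rewrite inE /= Dab /prec /preceq Cba Hba connect0.
have [Tab|NTab] := boolP (T a b).
  by exists b; rewrite bag_self bag_par.
have [sTD [r [Hin Hc]]] := OB.
have Hbr : b != r by apply: contraNneq Nba => ->; exact: Hc.
have Hex : [exists u, T u b].
  have := Hin b; rewrite Hbr => /eqP/cards1P[u Hu].
  have: u \in [set u | T u b] by rewrite Hu inE.
  by rewrite inE => Tub; apply/existsP; exists u.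
have [aL|aNL] := boolP (a \in Leaf T).
  by exists b; rewrite bag_self bag_leaf.
have /existsP[p Tpb] := Hex.
have [pbr|pnbr] := boolP (2 <= #|[set y | T p y]|).
  exists a; rewrite bag_self bag_br //.
  by rewrite inE; apply/existsP; exists p; rewrite Tpb.
exfalso.
have Hle := Hopt a b Dab NTab Hex (oc_ob OB Dab Nba).
have Hp1 : forall y, T p y -> y = b.
  move=> y Tpy; apply/eqP; apply: contraNT pnbr => Hyb.
  rewrite (_ : 2 = #|[set y; b]|); last by rewrite cards2 Hyb.
  by apply: subset_leq_card; apply/subsetP => z; rewrite !inE => /orP[]/eqP->.
have Hpa : p != a by apply: contraNneq NTab => <-.
have Hpr : Leaf T \proper Leaf (one_change T a b).
  apply/properP; split.
    apply/subsetP => x /leafP Hx; apply/leafP => y.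
    have Hxa : x != a by apply: contraNneq aNL => <-; apply/leafP.
    by rewrite /one_change (negbTE (Hx y)) (negbTE Hxa).
  exists p.
    apply/leafP => y; rewrite /one_change (negbTE Hpa) /= orbF.
    by apply/negP => /andP[/Hp1 ->]; rewrite eqxx.
  by apply/leafP => H; move: (H b); rewrite Tpb.
by have := proper_card Hpr; rewrite ltnNge Hle.
Qed.

Lemma path_R T (P : pred V) x p : P x -> (forall z, z \in p -> P z) -> path T x p ->
  connect [rel u v | (T u v || T v u) && P u && P v] x (last x p).
Proof.
elim: p x => [|y p IH] x /= Px HP; first by rewrite connect0.
case/andP=> Txy Hp.
have Py : P y by apply: HP; rewrite inE eqxx.
have Rxy : [rel u v | (T u v || T v u) && P u && P v] x y by rewrite /= Txy Px Py.
apply: (@connect_trans _ _ y); first by apply: connect1; rewrite /= Txy Px Py.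
apply: IH => // z Hz.
by apply: HP; rewrite inE Hz orbT.
Qed.

Lemma run_int D T w i j : out_branching D T -> w \in bag D T i -> w \in bag D T j ->
  connect [rel x y | [rel x y | T x y || T y x] x y && (w \in bag D T x) && (w \in bag D T y)] i j.
Proof.
move=> OB wi wj.
set R := [rel x y | _].
have symR : symmetric R.
  move=> x y /=; rewrite orbC.
  by case: (w \in bag D T x); case: (w \in bag D T y); rewrite ?andbF ?andbT.
have [sTD [r [Hin Hc]]] := OB.
have [Hg|Hng] := boolP ((w \in BrSucc T) || (w \in Leaf T)).
  have Hall k : w \in bag D T k by case/orP: Hg => H; [apply: bag_br | apply: bag_leaf].
  have HR k : connect R r k.
    apply: (connect_sub _ (Hc k)) => x y Txy; apply: connect1; by rewrite /R /= Txy !Hall.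
  apply: connect_trans (HR j); rewrite (sym_connect_sym symR); exact: HR i.
have Hw k : w \in bag D T k -> connect R w k.
  move=> Hk; case/bag_inv: (Hk) => [Twk|[->|[H|[H|H]]]].
  - by apply: connect1; rewrite /R /= Twk bag_self Hk.
  - exact: connect0.
  - by move: Hng; rewrite H.
  - by move: Hng; rewrite H orbT.
  case/imsetP: H => -[a w'] /=; rewrite inE /= => /andP[/andP[Daw Hprec] Hpre] Hw'.
  subst w'; case/andP: Hprec => Cwk Hwk.
  case/connectP: Cwk => p Hp Hl; rewrite Hl.
  apply: (path_R (P := fun z => w \in bag D T z)) => //; first exact: bag_self.
  move=> z Hz; have [->|Hzw] := eqVneq z w; first exact: bag_self.
  apply: bag_head; apply/imsetP; exists (a, w) => //.
  rewrite inE /= Daw /prec /preceq (path_first_connect Hp) ?inE ?Hz ?orbT //=.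
  rewrite eq_sym Hzw /=; apply: connect_trans (path_last_connect Hp _) _.
    by rewrite inE Hz orbT.
  by rewrite -Hl.
apply: connect_trans (Hw j wj); rewrite (sym_connect_sym symR); exact: Hw i wi.
Qed.

End H2.

Theorem lemma1 (V : finType) (D T : rel V) :
  irreflexive D ->
  one_optimal D T ->
  tree_decomposition D [rel x y | T x y || T y x] (bag D T).
Proof.
move=> irrD Hopt; have OB := Hopt.1.
split; first exact: tree_part irrD OB.
split; first by move=> w; exists w; exact: bag_self.
split; first by move=> x y Dxy; exact: cover_arc irrD Hopt Dxy.
move=> w i j wi wj; exact: run_int OB wi wj.
Qed.
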